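(* Let $a>1$ and $c,d>0$ be fixed. There exist positive constants $M_x$ and $M_y$ (independent of $m,n$ and of $(x,y)$) such that for all $(x,y)\in[0,c]\times[0,d]$ and all $m,n\in\mathbb{N}$, \[ \hat{Y}_{m,n,a}\big((t-x)^4;x,y\big)\leq \frac{M_x}{m^2},\qquad \hat{Y}_{m,n,a}\big((s-y)^4;x,y\big)\leq \frac{M_y}{n^2}. \]
   Context: For $m,n\in\mathbb{N}$, $(x,y)\in[0,\infty)^2$ and integers $k_1,k_2\ge0$ let \[ s_{m,n,k_1,k_2}^a(x,y)=a^{-\frac{x}{a^{1/m}-1}}\,a^{-\frac{y}{a^{1/n}-1}}\,\frac{x^{k_1}y^{k_2}(\log a)^{k_1+k_2}}{(a^{1/m}-1)^{k_1}(a^{1/n}-1)^{k_2}\,k_1!\,k_2!}, \] and \[ \hat{Y}_{m,n,a}(f;x,y)=\sum_{k_1=0}^{\infty}\sum_{k_2=0}^{\infty}s_{m,n,k_1,k_2}^a(x,y)\,f\!\left(\tfrac{k_1}{m},\tfrac{k_2}{n}\right). \] $\hat{Y}_{m,n,a}(g(t,s);x,y)$ denotes the operator applied to $(t,s)\mapsto g(t,s)$ (with $t=k_1/m$, $s=k_2/n$). *)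

(* Defs.v *)
From Stdlib Require Import Reals.
From Coquelicot Require Import Coquelicot.
Open Scope R_scope.

Definition s_basis (m n : nat) (a : R) (k1 k2 : nat) (x y : R) : R :=
  let bm := Rpower a (1 / INR m) - 1 in
  let bn := Rpower a (1 / INR n) - 1 in
  Rpower a (- (x / bm)) * Rpower a (- (y / bn)) *
  ((x ^ k1 * y ^ k2 * (ln a) ^ (k1 + k2)) /
   (bm ^ k1 * bn ^ k2 * INR (Factorial.fact k1) * INR (Factorial.fact k2))).

Definition Yhat (m n : nat) (a : R) (f : R -> R -> R) (x y : R) : R :=
  Series (fun k1 : nat =>
    Series (fun k2 : nat =>
      s_basis m n a k1 k2 x y * f (INR k1 / INR m) (INR k2 / INR n))).

(* Main.v *)
Require Import Defs.
From Stdlib Require Import Reals Lra Lia.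
From Coquelicot Require Import Coquelicot.
Open Scope R_scope.

Ltac req := match goal with |- @eq _ ?x ?y => change (@eq R x y) end.

Definition pp (l : R) (k : nat) : R := exp (- l) * (l ^ k / INR (Factorial.fact k)).

Lemma isR_scal c a l : is_series a l -> is_series (fun n => c * a n) (c * l).
Proof. intro H. exact (is_series_scal c a l H). Qed.

Lemma isR_lin a b la lb c : is_series a la -> is_series b lb ->
  is_series (fun n => a n + c * b n) (la + c * lb).
Proof. intros Ha Hb. apply isR_scal with (c := c) in Hb.
  exact (is_series_plus _ _ _ _ Ha Hb). Qed.

Lemma pp0 l : is_series (pp l) 1.
Proof.
  pose proof (is_exp_Reals l) as H. unfold is_pseries in H.
  apply isR_scal with (c := exp (- l)) in H.
  replace 1 with (exp (-l) * exp l).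
  2:{ rewrite <- exp_plus. replace (-l + l) with 0 by ring. apply exp_0. }
  eapply is_series_ext; [|exact H]. intro k. unfold pp. simpl.
  change (scal (pow_n l k) (/ INR (Factorial.fact k))) with (pow_n l k * / INR (Factorial.fact k)).
  rewrite pow_n_pow. unfold Rdiv. reflexivity.
Qed.

Lemma pp_shift l h v : is_series (fun k => pp l k * h (S k)) v ->
  is_series (fun k => pp l k * INR k * h k) (l * v).
Proof.
  intro H. apply is_series_decr_1.
  match goal with |- is_series _ ?z => replace z with (l*v) end.
  2:{ unfold plus, opp; simpl. ring. }
  apply isR_scal with (c := l) in H.
  eapply is_series_ext; [|exact H]. intro k. unfold pp.
  change (Factorial.fact (S k)) with (S k * Factorial.fact k)%nat.
  rewrite mult_INR. simpl pow.
  assert (INR (Factorial.fact k) <> 0) by apply INR_fact_neq_0.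
  assert (INR (S k) <> 0) by (apply not_0_INR; lia).
  change (@eq R (l * (exp (- l) * (l ^ k / INR (Factorial.fact k)) * h (S k))) (exp (- l) * (l * l ^ k / (INR (S k) * INR (Factorial.fact k))) * INR (S k) * h (S k))). field. split; auto.
Qed.

Definition e1 (l : R) : R := l.
Definition e2 (l : R) : R := l * (l + 1).
Definition e3 (l : R) : R := l * (e2 l + 2 * l + 1).
Definition e4 (l : R) : R := l * (e3 l + 3 * e2 l + 3 * l + 1).

Lemma pp1 l : is_series (fun k => pp l k * INR k) (e1 l).
Proof.
  pose proof (pp_shift l (fun _ => 1) 1) as H.
  match goal with |- is_series _ ?z => replace z with (l*1) by (unfold e1; ring) end.
  eapply is_series_ext; [|apply H].
  - intro k. req. simpl. ring.
  - eapply is_series_ext; [|apply (pp0 l)]. intro k; req; simpl; ring.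
Qed.

Lemma pp2 l : is_series (fun k => pp l k * INR k ^ 2) (e2 l).
Proof.
  pose proof (pp_shift l (fun k => INR k) (e1 l + 1 * 1)) as H.
  match goal with |- is_series _ ?z => replace z with (l*(e1 l + 1 * 1)) by (unfold e1, e2; ring) end.
  eapply is_series_ext; [|apply H].
  - intro k. req. simpl. ring.
  - eapply is_series_ext; [|apply (isR_lin _ _ _ _ 1 (pp1 l) (pp0 l))].
    intro k. req. rewrite S_INR. ring.
Qed.

Lemma pp3 l : is_series (fun k => pp l k * INR k ^ 3) (e3 l).
Proof.
  pose proof (pp_shift l (fun k => INR k ^ 2) (e2 l + 2 * e1 l + 1 * 1)) as H.
  match goal with |- is_series _ ?z => replace z with (l*(e2 l + 2 * e1 l + 1 * 1)) by (unfold e1, e3; ring) end.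
  eapply is_series_ext; [|apply H].
  - intro k. req. simpl. ring.
  - eapply is_series_ext;
    [|apply (isR_lin _ _ _ _ 1 (isR_lin _ _ _ _ 2 (pp2 l) (pp1 l)) (pp0 l))].
    intro k. req. rewrite S_INR. ring.
Qed.

Lemma pp4 l : is_series (fun k => pp l k * INR k ^ 4) (e4 l).
Proof.
  pose proof (pp_shift l (fun k => INR k ^ 3) (e3 l + 3 * e2 l + 3 * e1 l + 1 * 1)) as H.
  match goal with |- is_series _ ?z => replace z with (l*(e3 l + 3 * e2 l + 3 * e1 l + 1 * 1)) by (unfold e1, e4; ring) end.
  eapply is_series_ext; [|apply H].
  - intro k. req. simpl. ring.
  - eapply is_series_ext;
    [|apply (isR_lin _ _ _ _ 1 (isR_lin _ _ _ _ 3 (isR_lin _ _ _ _ 3 (pp3 l) (pp2 l)) (pp1 l)) (pp0 l))].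
    intro k. req. rewrite S_INR. ring.
Qed.

Definition G (l X : R) := e4 l - 4 * X * e3 l + 6 * X ^ 2 * e2 l - 4 * X ^ 3 * e1 l + X ^ 4.

Lemma ppc l X : is_series (fun k => pp l k * (INR k - X) ^ 4) (G l X).
Proof.
  unfold G. match goal with |- is_series _ ?z => replace z with (e4 l + - 4 * X * e3 l + 6 * X^2 * e2 l + - 4 * X^3 * e1 l + X^4 * 1) by ring end.
  eapply is_series_ext;
  [|apply (isR_lin _ _ _ _ (X^4) (isR_lin _ _ _ _ (- 4 * X^3) (isR_lin _ _ _ _ (6 * X^2)
     (isR_lin _ _ _ _ (- 4 * X) (pp4 l) (pp3 l)) (pp2 l)) (pp1 l)) (pp0 l))].
  - intro k. req. cbv beta. ring.
Qed.
Lemma G_eq l X : G l X = l + 3 * l^2 - 4 * (X - l) * l + 6 * (X - l)^2 * l + (X - l)^4.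
Proof. unfold G, e4, e3, e2, e1. ring. Qed.

Lemma G_bound l X c D m : 0 <= l -> l <= c * m -> 0 <= X - l -> X - l <= D -> 1 <= m ->
  0 <= c -> 0 <= D ->
  G l X <= (c + 3 * c^2 + 6 * D^2 * c + D^4) * m^2.
Proof.
  intros H1 H2 H3 H4 H5 H6 H7. rewrite G_eq. set (d := X - l) in *.
  assert (A1 : 4 * d * l >= 0) by nra.
  assert (A2 : l <= c * m^2) by (assert (0 <= c*m*(m-1)) by (apply Rmult_le_pos; nra); nra).
  assert (A3 : l^2 <= c^2 * m^2) by nra.
  assert (A4 : d^2 <= D^2) by nra.
  assert (A5 : d^2 * l <= D^2 * (c * m^2)) by (apply Rmult_le_compat; nra).
  assert (A6 : d^4 <= D^4) by (replace (d^4) with (d^2*d^2) by ring; replace (D^4) with (D^2*D^2) by ring; apply Rmult_le_compat; nra).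
  assert (A7 : D^4 <= D^4 * m^2).
  { assert (0 <= D^4) by (apply pow_le; lra). assert (1 <= m^2) by nra.
    pose proof (Rmult_le_compat_l (D^4) 1 (m^2) H H0). lra. }
  replace ((c + 3 * c^2 + 6 * D^2 * c + D^4) * m^2) with (c*m^2 + 3*(c^2*m^2) + 6*(D^2*(c*m^2)) + D^4*m^2) by ring.
  lra.
Qed.

Lemma sep1 (P Q f : nat -> R) u : is_series P 1 -> is_series Q 1 ->
  is_series (fun k => P k * f k) u ->
  Series (fun k1 => Series (fun k2 => P k1 * Q k2 * f k1)) = u.
Proof.
  intros HP HQ Hf.
  rewrite (Series_ext _ (fun k1 => P k1 * f k1)). { now apply is_series_unique. }
  intro k1. rewrite (Series_ext _ (fun k2 => (P k1 * f k1) * Q k2)).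
  - rewrite Series_scal_l. rewrite (is_series_unique _ _ HQ). ring.
  - intro; ring.
Qed.

Lemma sep2 (P Q g : nat -> R) v : is_series P 1 ->
  is_series (fun k => Q k * g k) v ->
  Series (fun k1 => Series (fun k2 => P k1 * Q k2 * g k2)) = v.
Proof.
  intros HP Hg.
  rewrite (Series_ext _ (fun k1 => v * P k1)).
  { rewrite Series_scal_l. rewrite (is_series_unique _ _ HP). ring. }
  intro k1. rewrite (Series_ext _ (fun k2 => P k1 * (Q k2 * g k2))).
  - rewrite Series_scal_l. rewrite (is_series_unique _ _ Hg). ring.
  - intro; ring.
Qed.

Lemma bpos a m : 1 < a -> (0 < m)%nat -> 0 < Rpower a (1 / INR m) - 1.
Proof.
  intros ha hm. unfold Rpower.
  assert (0 < ln a) by (rewrite <- ln_1; apply ln_increasing; lra).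
  assert (0 < INR m) by (apply lt_0_INR; lia).
  assert (0 < 1 / INR m * ln a) by (apply Rmult_lt_0_compat; [apply Rdiv_lt_0_compat|]; lra).
  pose proof (exp_ineq1_le (1 / INR m * ln a)). lra.
Qed.

Lemma s_basis_eq m n a k1 k2 x y : 1 < a -> (0 < m)%nat -> (0 < n)%nat ->
  s_basis m n a k1 k2 x y =
  pp (x * ln a / (Rpower a (1 / INR m) - 1)) k1 * pp (y * ln a / (Rpower a (1 / INR n) - 1)) k2.
Proof.
  intros ha hm hn. pose proof (bpos a m ha hm). pose proof (bpos a n ha hn).
  unfold s_basis, pp. set (bm := Rpower a (1 / INR m) - 1) in *.
  set (bn := Rpower a (1 / INR n) - 1) in *.
  unfold Rpower at 1 2.
  replace (- (x / bm) * ln a) with (- (x * ln a / bm)) by (unfold Rdiv; ring).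
  replace (- (y / bn) * ln a) with (- (y * ln a / bn)) by (unfold Rdiv; ring).
  unfold Rdiv. rewrite pow_add, !Rpow_mult_distr, !pow_inv.
  assert (bm ^ k1 <> 0) by (apply pow_nonzero; lra).
  assert (bn ^ k2 <> 0) by (apply pow_nonzero; lra).
  pose proof (INR_fact_neq_0 k1). pose proof (INR_fact_neq_0 k2).
  field. repeat split; auto.
Qed.

Lemma one_coord a c m x : 1 < a -> 0 < c -> (0 < m)%nat -> 0 <= x <= c ->
  let l := x * ln a / (Rpower a (1 / INR m) - 1) in
  Series (fun k => pp l k * (INR k / INR m - x) ^ 4) <=
  (c + 3 * c^2 + 6 * (c * ln a)^2 * c + (c * ln a)^4) / INR m ^ 2.
Proof.
  intros ha hc hm hx l.
  assert (hL : 0 < ln a) by (rewrite <- ln_1; apply ln_increasing; lra).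
  assert (hM : 1 <= INR m) by (apply (le_INR 1); lia).
  pose proof (bpos a m ha hm) as hb.
  set (u := 1 / INR m * ln a).
  assert (hu : 0 < u) by (apply Rmult_lt_0_compat; [apply Rdiv_lt_0_compat|]; lra).
  assert (hLu : ln a = u * INR m) by (unfold u; field; lra).
  assert (hE : Rpower a (1 / INR m) = exp u) by reflexivity.
  rewrite hE in hb. unfold l in *. rewrite hE in *.
  set (E := exp u) in *.
  pose proof (exp_ineq1_le u) as i1. pose proof (exp_ineq1_le (- u)) as i2. fold E in i1.
  assert (hEE : E * exp (- u) = 1) by (unfold E; rewrite <- exp_plus; replace (u + - u) with 0 by ring; apply exp_0).
  assert (i3 : E * (1 - u) <= 1) by (assert (0 < E) by (unfold E; apply exp_pos); nra).
  set (lam := x * ln a / (E - 1)).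
  assert (hlb : lam * (E - 1) = x * ln a) by (unfold lam; field; lra).
  assert (h0 : 0 <= lam) by (unfold lam; apply Rmult_le_pos; [apply Rmult_le_pos; lra| left; apply Rinv_0_lt_compat; lra]).
  assert (h1 : lam <= x * INR m).
  { apply Rmult_le_reg_r with (E - 1); [lra|]. rewrite hlb, hLu.
    replace (x * (u * INR m)) with ((x * INR m) * u) by ring.
    apply Rmult_le_compat_l; [apply Rmult_le_pos; lra | idtac]. lra. }
  assert (h2 : INR m * x - lam <= c * ln a).
  { apply Rmult_le_reg_r with (E - 1); [lra|].
    assert (x * INR m * (E - 1) - lam * (E - 1) <= x * ln a * (E - 1)).
    { rewrite hlb, hLu. assert (0 <= x * INR m) by nra. nra. }
    assert (x * ln a * (E - 1) <= c * ln a * (E - 1)) by (apply Rmult_le_compat_r; [lra|]; apply Rmult_le_compat_r; lra).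
    nra. }
  rewrite (is_series_unique _ (/ INR m ^ 4 * G lam (INR m * x))).
  2:{ pose proof (isR_scal (/ INR m ^ 4) _ _ (ppc lam (INR m * x))) as H.
      eapply is_series_ext; [|exact H]. intro k. req. cbv beta. field. lra. }
  pose proof (G_bound lam (INR m * x) c (c * ln a) (INR m) h0 ltac:(nra) ltac:(lra) h2 hM ltac:(lra) ltac:(nra)) as HG.
  set (K := c + 3 * c ^ 2 + 6 * (c * ln a) ^ 2 * c + (c * ln a) ^ 4) in *.
  replace (K / INR m ^ 2) with (K * INR m ^ 2 / INR m ^ 4) by (field; lra).
  unfold Rdiv. rewrite Rmult_comm. apply Rmult_le_compat_r; [|lra].
  left. apply Rinv_0_lt_compat. apply pow_lt. lra.
Qed.

Lemma coord_is l m x : (0 < m)%nat ->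
  is_series (fun k => pp l k * (INR k / INR m - x)^4) (/ INR m ^ 4 * G l (INR m * x)).
Proof.
  intro hm. assert (Hm0 : 0 < INR m) by (apply lt_0_INR; lia).
  pose proof (isR_scal (/ INR m ^ 4) _ _ (ppc l (INR m * x))) as H.
  eapply is_series_ext; [|exact H]. intro k. req. cbv beta. field. lra.
Qed.

Theorem lemma5 (a c d : R) (ha : 1 < a) (hc : 0 < c) (hd : 0 < d) :
  exists Mx My : R, 0 < Mx /\ 0 < My /\
    forall (m n : nat) (x y : R), (0 < m)%nat -> (0 < n)%nat ->
      0 <= x <= c -> 0 <= y <= d ->
      Yhat m n a (fun t s => (t - x) ^ 4) x y <= Mx / (INR m) ^ 2 /\
      Yhat m n a (fun t s => (s - y) ^ 4) x y <= My / (INR n) ^ 2.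
Proof.
  assert (hL : 0 < ln a) by (rewrite <- ln_1; apply ln_increasing; lra).
  exists (c + 3 * c^2 + 6 * (c * ln a)^2 * c + (c * ln a)^4),
         (d + 3 * d^2 + 6 * (d * ln a)^2 * d + (d * ln a)^4).
  split. { assert (0 <= (c * ln a)^4) by (apply pow_le; nra). assert (0 <= (c*ln a)^2 * c) by (apply Rmult_le_pos; [apply pow_le|]; nra). nra. }
  split. { assert (0 <= (d * ln a)^4) by (apply pow_le; nra). assert (0 <= (d*ln a)^2 * d) by (apply Rmult_le_pos; [apply pow_le|]; nra). nra. }
  intros m n x y hm hn hx hy. unfold Yhat. split.
  - erewrite (Series_ext _ (fun k1 => Series (fun k2 => _ * _ * (fun k => (INR k / INR m - x)^4) k1))).
    2:{ intro k1. apply Series_ext. intro k2. rewrite (s_basis_eq m n a k1 k2 x y ha hm hn). reflexivity. }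
    rewrite (sep1 _ _ _ _ (pp0 _) (pp0 _) (Series_correct _ (ex_intro _ _ (coord_is _ m x hm)))).
    apply one_coord; auto.
  - erewrite (Series_ext _ (fun k1 => Series (fun k2 => _ * _ * (fun k => (INR k / INR n - y)^4) k2))).
    2:{ intro k1. apply Series_ext. intro k2. rewrite (s_basis_eq m n a k1 k2 x y ha hm hn). reflexivity. }
    rewrite (sep2 _ _ _ _ (pp0 _) (Series_correct _ (ex_intro _ _ (coord_is _ n y hn)))).
    apply one_coord; auto.
Qed.
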